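(* Let $q$ be a prime power, let $\mathcal{F}=(\mathcal{F}_1,\ldots,\mathcal{F}_r)$ be a flag on $\mathbb{F}_{q^n}$ whose best friend is the subfield $\mathbb{F}_{q^m}$, and let $\beta\in\mathbb{F}_{q^n}^*$. For $1\le i\le r$ let $\mathbb{F}_{q^{m_i}}$ denote the best friend of $\mathcal{F}_i$. Then $\mathrm{Orb}_\beta(\mathcal{F})$ is disjoint if and only if $$\langle\beta\rangle\cap\mathbb{F}_{q^m}^*=\langle\beta\rangle\cap\mathbb{F}_{q^{m_1}}^*=\cdots=\langle\beta\rangle\cap\mathbb{F}_{q^{m_r}}^*.$$ In particular, the cyclic orbit flag code $\mathrm{Orb}(\mathcal{F})$ is disjoint if and only if all the subspaces $\mathcal{F}_1,\ldots,\mathcal{F}_r$ have $\mathbb{F}_{q^m}$ as their best friend.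
   Context: A flag on $\mathbb{F}_{q^n}$ is a sequence $(\mathcal{F}_1,\ldots,\mathcal{F}_r)$ of $\mathbb{F}_q$-subspaces with $\{0\}\subsetneq\mathcal{F}_1\subsetneq\cdots\subsetneq\mathcal{F}_r\subsetneq\mathbb{F}_{q^n}$. For $\gamma\in\mathbb{F}_{q^n}^*$, $\mathcal{U}\gamma=\{u\gamma:u\in\mathcal{U}\}$, $\mathcal{F}\gamma=(\mathcal{F}_1\gamma,\ldots,\mathcal{F}_r\gamma)$; $\mathrm{Orb}_\beta(\mathcal{F})=\{\mathcal{F}\beta^j:0\le j\le|\beta|-1\}$ with $|\beta|$ the multiplicative order, and $\mathrm{Orb}(\mathcal{F})=\{\mathcal{F}\gamma:\gamma\in\mathbb{F}_{q^n}^*\}$. A subfield $\mathbb{F}_{q^k}$ is a friend of a subspace $\mathcal{U}$ if $\mathcal{U}$ is an $\mathbb{F}_{q^k}$-vector space, and a friend of $\mathcal{F}$ if it is a friend of every $\mathcal{F}_i$; the best friend is the largest friend. For a set $\mathcal{C}$ of flags, its $i$-th projected code $\mathcal{C}_i$ is the set of $i$-th subspaces of its flags; $\mathcal{C}$ is disjoint if $|\mathcal{C}_1|=\cdots=|\mathcal{C}_r|=|\mathcal{C}|$. *)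

(* Defs.v *)
From HB Require Import structures.
From mathcomp Require Import all_boot all_order all_algebra all_fingroup all_field.
Set Implicit Arguments. Unset Strict Implicit. Unset Printing Implicit Defensive.
Import GRing.Theory.
Local Open Scope ring_scope.

(* Setting: F = F_q is a finite field, L = F_{q^n} is a finite field extension
   of F (fieldExtType F).  F_q-subspaces of L are {vspace L}; the subfields
   F_{q^k} of L (all of which contain F_q) are {subfield L}. *)

Section Flags.
Variables (F : finFieldType) (L : fieldExtType F).

Definition vmul (U : {vspace L}) (g : L) : {vspace L} := (U * <[g]>)%VS.

Definition is_flag (r : nat) (Fl : {ffun 'I_r -> {vspace L}}) : Prop :=
  (forall i : 'I_r, Fl i != 0%VS) /\
  (forall i : 'I_r, Fl i != fullv) /\
  (forall i j : 'I_r, (i < j)%N -> (Fl i <= Fl j)%VS /\ Fl i != Fl j).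

Definition flag_mul (r : nat) (Fl : {ffun 'I_r -> {vspace L}}) (g : L)
  : {ffun 'I_r -> {vspace L}} := [ffun i => vmul (Fl i) g].

(* K is a friend of U : U is a K-vector space, i.e. K U <= U. *)
Definition friend (K : {subfield L}) (U : {vspace L}) : bool := (K * U <= U)%VS.

Definition best_friend (K : {subfield L}) (U : {vspace L}) : Prop :=
  friend K U /\ forall K' : {subfield L}, friend K' U -> (K' <= K)%VS.

Definition flag_friend r (K : {subfield L}) (Fl : {ffun 'I_r -> {vspace L}}) :=
  forall i : 'I_r, friend K (Fl i).

Definition flag_best_friend r (K : {subfield L}) (Fl : {ffun 'I_r -> {vspace L}})
  : Prop :=
  flag_friend K Fl /\ forall K' : {subfield L}, flag_friend K' Fl -> (K' <= K)%VS.

(* Multiplicative order |beta| of a nonzero beta: the least k >= 1 with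
   beta^k = 1 (searched in [1, #|L|], which always contains it). *)
Definition mult_order (b : L) : nat :=
  head 0%N [seq k <- iota 1 #|finvect_type L| | b ^+ k == 1].

Definition orb_beta r (Fl : {ffun 'I_r -> {vspace L}}) (b : L)
  : seq {ffun 'I_r -> {vspace L}} :=
  undup [seq flag_mul Fl (b ^+ j) | j <- iota 0 (mult_order b)].

Definition orb r (Fl : {ffun 'I_r -> {vspace L}})
  : seq {ffun 'I_r -> {vspace L}} :=
  undup [seq flag_mul Fl (g : L) | g <- enum [pred x : finvect_type L | x != 0]].

Definition disjoint_code r (C : seq {ffun 'I_r -> {vspace L}}) : Prop :=
  forall i : 'I_r, size (undup (map (fun c : {ffun 'I_r -> {vspace L}} => c i) C)) = size C.

Definition cyc_cap_eq (b : L) (K K' : {subfield L}) : Prop :=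
  forall k : nat, (b ^+ k \in K) = (b ^+ k \in K').

End Flags.

(* Main.v *)
Require Import Defs.
From HB Require Import structures.
From mathcomp Require Import all_boot all_order all_algebra all_fingroup all_field.
Import GRing.Theory.
Local Open Scope ring_scope.
Set Implicit Arguments. Unset Strict Implicit.

Lemma disj_iff (T U V : eqType) (f : T -> U) (g : U -> V) s :
  size (undup (map g (undup (map f s)))) = size (undup (map f s)) <->
  {in s &, forall j k, g (f j) = g (f k) -> f j = f k}.
Proof.
set C := undup (map f s).
have uC : uniq C by apply: undup_uniq.
have step : size (undup (map g C)) = size C <-> {in C &, injective g}.
  split.
  - move=> Hs.
    have um : uniq (map g C).
      apply: (leq_size_uniq (undup_uniq (map g C))).
      + by move=> x; rewrite mem_undup.
      + by rewrite size_map Hs.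
    move=> x y xC yC gxy.
    have Ei : index x C = index y C.
      apply/eqP; rewrite -(@nth_uniq _ (g x) (map g C)) ?size_map ?index_mem //.
      rewrite (nth_map x) ?index_mem // (nth_map x) ?index_mem // (nth_index x xC) (nth_index x yC) gxy //.
    by rewrite -(nth_index x xC) Ei nth_index.
  - move=> inj; rewrite undup_id ?size_map //.
    by rewrite map_inj_in_uniq.
split.
- move=> /step inj j k js ks; apply: inj; by rewrite mem_undup map_f.
- move=> H; apply/step => x y; rewrite !mem_undup => /mapP[j js ->] /mapP[k ks ->].
  exact: H.
Qed.

Lemma divf_neq0 (R : fieldType) (x y : R) : x != 0 -> y != 0 -> x / y != 0.
Proof. by move=> x0 y0; rewrite mulf_neq0 // invr_eq0. Qed.

Section S.
Variables (F : finFieldType) (L : fieldExtType F).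

Lemma vmul_sub (U W : {vspace L}) g :
  (forall u, u \in U -> u * g \in W) -> (vmul U g <= W)%VS.
Proof.
move=> H; apply/prodvP => u v uU /vlineP[k ->].
rewrite -scalerAr; apply: memvZ; exact: H.
Qed.

Lemma mem_vmul (U : {vspace L}) g u : u \in U -> u * g \in vmul U g.
Proof. move=> uU; exact: memv_mul uU (memv_line g). Qed.

Lemma vmulA (U : {vspace L}) x y : vmul (vmul U x) y = vmul U (x * y).
Proof. by rewrite /vmul -prodvA prodv_line. Qed.

Lemma vmul1 (U : {vspace L}) : vmul U 1 = U.
Proof. by rewrite /vmul prodv1. Qed.

Lemma friend_stab (K : {subfield L}) (U : {vspace L}) g :
  friend K U -> g \in K -> g != 0 -> vmul U g = U.
Proof.
move=> fr gK gn0.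
have H : forall x, x \in K -> (vmul U x <= U)%VS.
  move=> x xK; apply: vmul_sub => u uU; rewrite mulrC.
  exact: (subvP fr) _ (memv_mul xK uU).
apply/eqP; rewrite eqEsubv H //=.
apply/subvP => u uU.
have -> : u = (u * g^-1) * g by rewrite mulfVK.
apply: mem_vmul; apply: (subvP (H g^-1 _)); first by rewrite memvV.
exact: mem_vmul.
Qed.

Lemma stab_friend (U : {vspace L}) g : vmul U g = U -> friend <<1; g>>%AS U.
Proof.
move=> Hg; apply/prodvP => v u /Fadjoin1_polyP[p ->] uU.
have gW : forall w, w \in U -> g * w \in U.
  by move=> w wU; have := @mem_vmul U g w wU; rewrite Hg mulrC.
have gi : forall i w, w \in U -> g ^+ i * w \in U.
  elim=> [|i IH] w wU; first by rewrite expr0 mul1r.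
  by rewrite exprSr -mulrA IH // gW.
rewrite horner_coef mulr_suml; apply: memv_suml => i _.
rewrite coef_map /= -mulrA mulr_algl; apply: memvZ; exact: gi.
Qed.

Lemma stab_in (U : {vspace L}) (Ku : {subfield L}) g :
  best_friend Ku U -> vmul U g = U -> g \in Ku.
Proof.
case=> _ H Hg; rewrite -sub_adjoin1v; apply: H; exact: stab_friend.
Qed.

Lemma vmul_eq (U : {vspace L}) x y : y != 0 ->
  (vmul U x = vmul U y) <-> (vmul U (x / y) = U).
Proof.
move=> y0; split.
- by move=> E; rewrite -vmulA E vmulA mulfV // vmul1.
- by move=> E; rewrite -{1}(divfK y0 x) -vmulA E.
Qed.

Lemma mult_order_prop (b : L) : b != 0 ->
  (0 < mult_order b)%N /\ b ^+ mult_order b = 1.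
Proof.
move=> b0.
set n := #|finvect_type L|.
have n1 : (1 < n)%N by apply: card_finNzRing_gt1.
have bn : b ^+ n.-1 = 1.
  apply: (mulIf b0); rewrite mul1r -exprSr prednK ?(ltnW n1) //.
  exact: (@expf_card (finvect_type L) b).
rewrite /mult_order.
set s := [seq k <- iota 1 n | b ^+ k == 1].
have ms : n.-1 \in s.
  rewrite mem_filter bn eqxx /= mem_iota.
  by move: n1; case: (n) => [|[|m]] // _; rewrite add1n ltnS leqnSn.
case Es: s => [|h t]; first by rewrite Es in ms.
have : h \in s by rewrite Es mem_head.
by rewrite mem_filter mem_iota => /andP[/eqP -> /andP[]].
Qed.

End S.

Unset Implicit Arguments. Set Strict Implicit.

Theorem proposition4p19 (F : finFieldType) (L : fieldExtType F) (r : nat)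
    (Fl : {ffun 'I_r -> {vspace L}}) (K : {subfield L})
    (Ki : 'I_r -> {subfield L}) (b : L) :
  is_flag Fl ->
  flag_best_friend K Fl ->
  (forall i : 'I_r, best_friend (Ki i) (Fl i)) ->
  b != 0 ->
  (disjoint_code (orb_beta Fl b) <->
     (forall i : 'I_r, cyc_cap_eq b K (Ki i))) /\
  (disjoint_code (orb Fl) <-> (forall i : 'I_r, best_friend K (Fl i))).
Proof.
move=> _ [KF KB] KiB b0.
have A : forall i x, x != 0 -> (vmul (Fl i) x = Fl i <-> x \in Ki i).
  move=> i x x0; split; first exact: stab_in (KiB i).
  by move=> xK; apply: friend_stab (KiB i).1 xK x0.
have B : forall x, x != 0 -> (forall i, vmul (Fl i) x = Fl i) -> x \in K.
  move=> x x0 H; rewrite -sub_adjoin1v; apply: KB => i; exact: stab_friend.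
have KKi : forall i, (K <= Ki i)%VS by move=> i; apply: (KiB i).2; exact: KF.
have C : forall i x, x \in K -> x \in Ki i by move=> i x; apply: (subvP (KKi i)).
have fE : forall x i, flag_mul Fl x i = vmul (Fl i) x by move=> x i; rewrite ffunE.
split.
- have [N0 bN] := mult_order_prop b0.
  set N := mult_order b in N0 bN *.
  rewrite /disjoint_code /orb_beta -/N.
  split.
  + move=> H i k; apply/idP/idP; first exact: C.
    move=> bk.
    set j := (k %% N)%N.
    have bkj : b ^+ k = b ^+ j.
      by rewrite {1}(divn_eq k N) exprD mulnC exprM bN expr1n mul1r.
    rewrite bkj in bk *.
    have bj0 : b ^+ j != 0 by rewrite expf_neq0.
    apply: B => // i'.
    have E := (disj_iff (fun j0 => flag_mul Fl (b ^+ j0)) (fun c => c i) (iota 0 N)).1 (H i).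
    have jN : j \in iota 0 N by rewrite mem_iota add0n ltn_pmod.
    have zN : 0%N \in iota 0 N by rewrite mem_iota.
    have := E j 0%N jN zN; rewrite /= !fE expr0 vmul1 ((A i _ bj0).2 bk).
    move=> /(_ erefl) Efj; have := congr1 (fun c : {ffun 'I_r -> {vspace L}} => c i') Efj; rewrite !fE vmul1 //.
  + move=> H i; apply/(disj_iff (fun j0 => flag_mul Fl (b ^+ j0)) (fun c => c i) (iota 0 N)).
    move=> j k; rewrite !mem_iota /= !add0n => jN kN.
    have bk0 : b ^+ k != 0 by rewrite expf_neq0.
    have bj0 : b ^+ j != 0 by rewrite expf_neq0.
    rewrite !fE => /(vmul_eq _ _ bk0) /(A i _ (divf_neq0 bj0 bk0)).
    have -> : b ^+ j / b ^+ k = b ^+ (j + (N - k)).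
      apply: (mulIf bk0); rewrite divfK // -exprD -addnA subnK ?(ltnW kN) //.
      by rewrite exprD bN mulr1.
    rewrite -(H i) => bK.
    apply/ffunP => i'; rewrite !fE; apply/(vmul_eq _ _ bk0).
    apply/(A i' _ (divf_neq0 bj0 bk0)).
    have -> : b ^+ j / b ^+ k = b ^+ (j + (N - k)).
      apply: (mulIf bk0); rewrite divfK // -exprD -addnA subnK ?(ltnW kN) //.
      by rewrite exprD bN mulr1.
    exact: C.
- rewrite /disjoint_code /orb; split.
  + move=> H i; split; first exact: KF.
    move=> K' fK'; apply: (subv_trans ((KiB i).2 K' fK')).
    apply/subvP => x xKi.
    have [-> | x0] := eqVneq x 0; first exact: mem0v.
    apply: B => // i'.
    have E := (disj_iff (fun g : finvect_type L => flag_mul Fl (g : L)) (fun c => c i)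
                 (enum [pred x : finvect_type L | x != 0])).1 (H i).
    have := E x 1; rewrite !mem_enum /= !fE vmul1 (A i _ x0).2 //.
    move=> /(_ x0 (oner_neq0 _) erefl) Efj; have := congr1 (fun c : {ffun 'I_r -> {vspace L}} => c i') Efj; rewrite !fE vmul1 //.
  + move=> H i.
    apply/(disj_iff (fun g : finvect_type L => flag_mul Fl (g : L)) (fun c => c i)
                 (enum [pred x : finvect_type L | x != 0])).
    move=> x y; rewrite !mem_enum /= => x0 y0.
    rewrite !fE => /(vmul_eq _ _ y0) /(A i _ (divf_neq0 x0 y0)) xyK.
    have xyK' : x / y \in K by apply: (subvP ((H i).2 _ (KiB i).1)).
    apply/ffunP => i'; rewrite !fE; apply/(vmul_eq _ _ y0).
    apply/(A i' _ (divf_neq0 x0 y0)); exact: C.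
Qed.
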